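(* Let $\mathcal R$ be a measure-preserving equivalence relation on a standard probability space $(X,\mu)$ and suppose there is $n\in\mathbb N$ such that every $\mathcal R$-class has cardinality at most $n$. Then the full group $[\mathcal R]$ is locally finite.
   Context: Null sets are ignored. $[\mathcal R]$ is the group of measure-preserving transformations $T$ of $X$ with $(x,T(x))\in\mathcal R$ for all $x$. A group is locally finite if every finitely generated subgroup is finite. *)

(* Defs.v *)
From HB Require Import structures.
From mathcomp Require Import all_boot all_order all_algebra.
From mathcomp Require Import all_classical all_reals all_analysis.
Set Implicit Arguments. Unset Strict Implicit. Unset Printing Implicit Defensive.
Import Order.TTheory GRing.Theory Num.Theory.
Local Open Scope classical_set_scope.
Local Open Scope ring_scope.

(* Standard Borel space: Borel-isomorphic to a Borel subset of the Polish space R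
   (Kuratowski); f is an injective measurable map with measurable images of
   measurable sets. *)
Definition standard_borel (d : measure_display) (X : measurableType d)
  (R : realType) : Prop :=
  exists f : X -> R, [/\ injective f, measurable_fun setT f &
    forall A : set X, measurable A -> measurable (f @` A)].

Definition equiv_rel (X : Type) (E : set (X * X)) : Prop :=
  [/\ forall x, E (x, x),
      forall x y, E (x, y) -> E (y, x) &
      forall x y z, E (x, y) -> E (y, z) -> E (x, z)].

Definition borel_automorphism (d : measure_display) (X : measurableType d)
  (T : X -> X) : Prop :=
  measurable_fun setT T /\
  exists U : X -> X, [/\ cancel T U, cancel U T & measurable_fun setT U].

Definition preserves (d : measure_display) (X : measurableType d)
  (R : realType) (mu : probability X R) (T : X -> X) : Prop :=
  forall A : set X, measurable A -> mu (T @^-1` A) = mu A.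

Definition mp_equiv_rel (d : measure_display) (X : measurableType d)
  (R : realType) (mu : probability X R) (E : set (X * X)) : Prop :=
  [/\ equiv_rel E, measurable E &
      forall T : X -> X, borel_automorphism T -> (forall x, E (x, T x)) ->
        preserves mu T].

Definition full_group (d : measure_display) (X : measurableType d)
  (R : realType) (mu : probability X R) (E : set (X * X)) (T : X -> X) : Prop :=
  [/\ borel_automorphism T, preserves mu T & forall x, E (x, T x)].

Inductive gen (X : Type) (S : set (X -> X)) : (X -> X) -> Prop :=
| gen_id : gen S id
| gen_base T : S T -> gen S T
| gen_inv T U : gen S T -> cancel T U -> cancel U T -> gen S U
| gen_comp T U : gen S T -> gen S U -> gen S (T \o U).

(* Local finiteness of [E], where elements are identified mod null sets:
   for every finite family of elements of [E], the subgroup they generate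
   has finitely many elements up to mu-a.e. equality. *)
Definition full_group_locally_finite (d : measure_display)
  (X : measurableType d) (R : realType) (mu : probability X R)
  (E : set (X * X)) : Prop :=
  forall (k : nat) (gens : 'I_k -> X -> X),
    (forall i, full_group mu E (gens i)) ->
    exists (m : nat) (F : 'I_m -> X -> X),
      forall g, gen (range gens) g ->
        exists j : 'I_m, {ae mu, forall x, g x = F j x}.

(* Main.v *)
Require Import Defs.
From HB Require Import structures.
From mathcomp Require Import all_boot all_order all_algebra.
From mathcomp Require Import all_classical all_reals all_analysis.
Local Open Scope classical_set_scope.
Local Open Scope ring_scope.

Theorem mainTheorem9 (d : measure_display) (X : measurableType d)
  (R : realType) (mu : probability X R) (E : set (X * X)) (n : nat) :
  standard_borel X R ->
  mp_equiv_rel mu E ->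
  (forall x : X, exists c : 'I_n -> X, forall y, E (x, y) -> exists i, y = c i) ->
  full_group_locally_finite mu E.
Proof.
move=> _ [[Erefl Esym Etrans] _ _] Hcl k gens Hgens.
have [c0 Hc0] := choice Hcl.
pose c x a := if `[< E (x, c0 x a) >] then c0 x a else x.
have c_in x a : E (x, c x a).
  by rewrite /c; case: asboolP.
have c_cov x y : E (x, y) -> exists a, c x a = y.
  move=> Exy; have [a Ha] := Hc0 x y Exy; exists a.
  by rewrite /c -Ha; case: asboolP.
have gE i y : E (y, gens i y) by have [_ _] := Hgens i.
have [iota Hiota] := choice (fun x => c_cov x x (Erefl x)).
have [tab Htab] : {tab : X -> 'I_k -> 'I_n -> 'I_n &
    forall x i a, gens i (c x a) = c x (tab x i a)}.
  have H1 : forall x, exists t : 'I_k -> 'I_n -> 'I_n,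
      forall i a, gens i (c x a) = c x (t i a).
    move=> x.
    have H2 : forall p : 'I_k * 'I_n, exists b, gens p.1 (c x p.2) = c x b.
      move=> [i a] /=.
      have [b Hb] := c_cov x (gens i (c x a)) (Etrans _ _ _ (c_in x a) (gE i _)).
      by exists b.
    have [f Hf] := choice H2.
    by exists (fun i a => f (i, a)) => i a; rewrite (Hf (i, a)).
  have [t Ht] := choice H1; by exists t.
pose T := ('I_n * {ffun 'I_k -> {ffun 'I_n -> 'I_n}} * {ffun 'I_n -> {ffun 'I_n -> bool}})%type.
pose tau (x : X) : T := (iota x, [ffun i => [ffun a => tab x i a]],
   [ffun a => [ffun b => `[< c x a = c x b >]]]).
have key : forall g, gen (range gens) g ->
   (forall y, E (y, g y)) /\
   exists H : T -> 'I_n -> 'I_n, forall x a, g (c x a) = c x (H (tau x) a).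
  move=> g; elim=> {g}.
  - split=> [y|]; first exact: Erefl.
    by exists (fun _ a => a).
  - move=> _ [i _ <-]; split; first exact: gE.
    exists (fun (t : T) a => t.1.2 i a) => x a /=.
    by rewrite !ffunE Htab.
  - move=> G U _ [GE [H HH]] GU UG; split.
      by move=> y; apply: Esym; have := GE (U y); rewrite UG.
    exists (fun (t : T) a => if [pick b | t.2 (H t b) a] is Some b then b else a).
    move=> x a.
    case: pickP => [b /= | Hn].
      rewrite !ffunE => /asboolP Hb.
      by rewrite -Hb -HH GU.
    exfalso.
    have Ey : E (x, U (c x a)).
      apply: Etrans (c_in x a) _; apply: Esym.
      by have := GE (U (c x a)); rewrite UG.
    have [b Hb] := c_cov x _ Ey.
    have := Hn b; rewrite /= !ffunE.
    move/asboolP; apply.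
    by rewrite -HH Hb UG.
  - move=> G U _ [GE [H HH]] _ [UE [H' HH']]; split.
      by move=> y; apply: Etrans (UE y) (GE (U y)).
    exists (fun t a => H t (H' t a)) => x a /=.
    by rewrite HH' HH.
pose FT := {ffun T -> 'I_n}.
exists #|FT|.
exists (fun (j : 'I_#|FT|) x => c x ((@enum_val FT FT j) (tau x))).
move=> g /key [_ [H HH]].
exists (@enum_rank FT [ffun t : T => H t t.1.1]).
apply: aeW => x.
rewrite (@enum_rankK FT) ffunE /=.
by rewrite -HH Hiota.
Qed.
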